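(* If $R$ is a prime right almost perfect ring, then $R$ is $h$-local.
   Context: Rings are associative with identity $1\neq 0$. A ring $R$ is called right almost perfect if $R/I$ is a right perfect ring for every two-sided ideal $I$ of $R$ with $I\neq 0$ and $I\neq R$. A ring is semilocal if $R/J(R)$ is semisimple artinian, where $J(R)$ is the Jacobson radical. A (prime) ring $R$ is called $h$-local if: (1) for every non-zero proper two-sided ideal $I$ of $R$, the factor ring $R/I$ is semilocal; and (2) every non-zero prime two-sided ideal of $R$ is contained in only one maximal two-sided ideal of $R$. *)

(* Defs.v *)
From HB Require Import structures.
From mathcomp Require Import all_boot all_order all_algebra.
Set Implicit Arguments. Unset Strict Implicit. Unset Printing Implicit Defensive.
Import GRing.Theory.
Local Open Scope ring_scope.

Section RingDefs.
Variable R : nzRingType.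

Definition subset_of (A B : R -> Prop) := forall x, A x -> B x.
Definition same_set (A B : R -> Prop) := forall x, A x <-> B x.

Definition is_addsub (A : R -> Prop) :=
  A 0 /\ (forall x y, A x -> A y -> A (x - y)).

Definition is_right_ideal (A : R -> Prop) :=
  is_addsub A /\ (forall x r, A x -> A (x * r)).

Definition is_ideal (I : R -> Prop) :=
  is_addsub I /\ (forall r x, I x -> I (r * x)) /\ (forall x r, I x -> I (x * r)).

Definition proper_set (I : R -> Prop) := exists x, ~ I x.
Definition nonzero_set (I : R -> Prop) := exists x, I x /\ x <> 0.

(* Maximal right ideals of R containing I (= maximal right ideals of R/I). *)
Definition max_right_ideal_over (I M : R -> Prop) :=
  is_right_ideal M /\ subset_of I M /\ proper_set M /\
  (forall N, is_right_ideal N -> subset_of M N ->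
     same_set N M \/ (forall x, N x)).

(* Preimage in R of the Jacobson radical J(R/I):
   intersection of all maximal right ideals of R/I. *)
Definition jac_mod (I : R -> Prop) : R -> Prop :=
  fun x => forall M, max_right_ideal_over I M -> M x.

(* R/K is a semisimple (artinian) ring: every right ideal of R/K is a
   direct summand of (R/K)_(R/K). Right ideals of R/K correspond to right
   ideals of R containing K. *)
Definition semisimple_mod (K : R -> Prop) :=
  forall A, is_right_ideal A -> subset_of K A ->
    exists B, is_right_ideal B /\ subset_of K B /\
      (forall x, exists a b, A a /\ B b /\ x = a + b) /\
      (forall x, A x -> B x -> K x).

(* R/I is semilocal: (R/I)/J(R/I) is semisimple artinian. *)
Definition semilocal_mod (I : R -> Prop) := semisimple_mod (jac_mod I).

Fixpoint rprod (a : nat -> R) (n : nat) : R :=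
  match n with
  | 0 => a 0%N
  | n'.+1 => a n * rprod a n'
  end.

Definition right_T_nilpotent_mod (I J : R -> Prop) :=
  forall a : nat -> R, (forall n, J (a n)) -> exists n, I (rprod a n).

(* R/I is right perfect (Bass): R/I semilocal and J(R/I) right T-nilpotent. *)
Definition right_perfect_mod (I : R -> Prop) :=
  semilocal_mod I /\ right_T_nilpotent_mod I (jac_mod I).

Definition right_almost_perfect :=
  forall I, is_ideal I -> nonzero_set I -> proper_set I -> right_perfect_mod I.

Definition prime_ring :=
  forall a b : R, (forall r, a * r * b = 0) -> a = 0 \/ b = 0.

Definition prime_ideal (P : R -> Prop) :=
  is_ideal P /\ proper_set P /\
  (forall a b, (forall r, P (a * r * b)) -> P a \/ P b).

Definition maximal_ideal (M : R -> Prop) :=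
  is_ideal M /\ proper_set M /\
  (forall N, is_ideal N -> subset_of M N -> same_set N M \/ (forall x, N x)).

Definition h_local :=
  (forall I, is_ideal I -> nonzero_set I -> proper_set I -> semilocal_mod I) /\
  (forall P, prime_ideal P -> nonzero_set P ->
     exists M, maximal_ideal M /\ subset_of P M /\
       forall M', maximal_ideal M' -> subset_of P M' -> same_set M' M).

End RingDefs.

(* Main.v *)
Require Import Defs.
From mathcomp Require Import all_boot all_order all_algebra.
From Stdlib Require Import Classical ClassicalEpsilon.
Import GRing.Theory.
Local Open Scope ring_scope.

Section Aux.
Variable R : nzRingType.
Variable P : R -> Prop.
Hypothesis HP : prime_ideal P.
Variable x : R.
Hypothesis Hx : ~ P x.

Definition stp (p : R) : R :=
  epsilon (inhabits 0) (fun r => ~ P (x * r * p)).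

Lemma stp_spec p : ~ P p -> ~ P (x * stp p * p).
Proof.
move=> Hp; rewrite /stp; apply: (epsilon_spec (inhabits 0) (fun r => ~ P (x * r * p))).
case: HP => _ [_ Hpr].
apply: NNPP => H; have H2 : forall r, P (x * r * p).
  by move=> r; apply: NNPP => Hr; apply: H; exists r.
by case: (Hpr _ _ H2).
Qed.

Fixpoint pr (n : nat) : R :=
  match n with 0 => x | n'.+1 => x * stp (pr n') * pr n' end.

Definition seqa (n : nat) : R :=
  match n with 0 => x | n'.+1 => x * stp (pr n') end.

Lemma rprod_pr n : rprod seqa n = pr n.
Proof. by elim: n => [|n IH] //=; rewrite IH. Qed.

Lemma pr_notP n : ~ P (pr n).
Proof. by elim: n => [|n IH] //=; apply: stp_spec. Qed.
End Aux.

Lemma jac_sub (R : nzRingType) (P : R -> Prop) :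
  prime_ideal P -> right_T_nilpotent_mod P (jac_mod P) ->
  subset_of (jac_mod P) P.
Proof.
move=> HP HT x Jx; apply: NNPP => Hx.
have Ja : forall n, jac_mod P (@seqa R P x n).
  case=> [|n] //= M HM; have := Jx M HM.
  by case: HM => [[_ Hr] _]; apply: Hr.
have [n Hn] := HT _ Ja.
by rewrite rprod_pr in Hn; exact: (@pr_notP R P HP x Hx n Hn).
Qed.

Theorem corollary3p4 (R : nzRingType) :
  prime_ring R -> right_almost_perfect R -> h_local R.
Proof.
move=> _ Hap; split.
  by move=> I HI Hn Hp; case: (Hap I HI Hn Hp).
move=> P HP Hnz.
have HPc := HP; case: HPc => HPi [HPp HPpr].
have [Hss HT] := Hap P HPi Hnz HPp.
have Jsub := @jac_sub R P HP HT.
have Pmax : maximal_ideal P.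
  split=> //; split=> // N HN PN.
  case: (classic (exists n, N n /\ ~ P n)) => [[n [Nn nP]]|H]; last first.
    left=> y; split; last by apply: PN.
    by move=> Ny; apply: NNPP => Hy; apply: H; exists y.
  right.
  case: HN => [[N0 Nsub] [Nl Nr]].
  have NrI : is_right_ideal N by split.
  have JN : subset_of (jac_mod P) N by move=> y /Jsub; apply: PN.
  have [B [[[B0 Bsub] Br] [JB [Hsum Hint]]]] := Hss N NrI JN.
  have BP : forall b, B b -> P b.
    move=> b Bb.
    have H : forall r, P (b * r * n).
      move=> r; apply: Jsub; apply: Hint.
        by apply: Nl.
      by rewrite -mulrA; exact: (Br _ _ Bb).
    by case: (HPpr _ _ H).
  move=> y; have [a [b [Na [Bb ->]]]] := Hsum y.
  have Nb : N b by apply: PN; apply: BP.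
  have -> : a + b = a - (0 - b) by rewrite sub0r opprK.
  by apply: (Nsub) => //; apply: (Nsub).
exists P; split=> //; split; first by move=> y.
move=> M' [HM' [[z Hz] _]] PM'.
case: Pmax => _ [_ Hm].
case: (Hm M' HM' PM') => // Hall.

Qed.
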